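(* Let $K=3$ and $r^\star(a)=\mathbb{1}(a=1)$. For every integer $n>500$ there exists a distribution $\mu$ on ordered pairs of distinct arms such that, with probability at least $0.09$ over a dataset $\mathcal{D}$ of $n$ i.i.d. samples generated as in the context, for every sequence $(r^{(m)})_{m\ge1}\subset\{r\in\mathbb{R}^3:r(3)=0\}$ with $\hat{\mathcal{L}}_{\mathsf{CE}}(\mathcal{D},r^{(m)})\to\inf_{r(3)=0}\hat{\mathcal{L}}_{\mathsf{CE}}(\mathcal{D},r)$, there is $m_0$ such that for all $m\ge m_0$, arm $1$ is not a maximizer of $r^{(m)}$; consequently every policy $\hat\pi_\infty$ supported on $\arg\max_a r^{(m)}(a)$ satisfies $$\mathsf{SubOpt}(\hat\pi_\infty)\ge 1.$$
   Context: $K$-armed bandit preference model. Arms are $[K]$ with deterministic ground-truth rewards $r^\star(a)$. Let $\sigma(x)=e^x/(1+e^x)$. A sample $(a,a',y)$ is generated by drawing $(a,a')\sim\mu$ (a distribution on ordered pairs of distinct arms) and $y\sim\mathrm{Bernoulli}(\sigma(r^\star(a)-r^\star(a')))$, $y=1$ meaning $a$ is preferred; $\mathcal{D}=\{(a_i,a_i',y_i)\}_{i=1}^n$ consists of $n$ i.i.d. samples. Empirical cross-entropy loss: $$\hat{\mathcal{L}}_{\mathsf{CE}}(\mathcal{D},r)=-\frac1n\sum_{i=1}^n\Big[y_i\log\sigma(r(a_i)-r(a_i'))+(1-y_i)\log\sigma(r(a_i')-r(a_i))\Big].$$ The policy $\hat\pi_\infty$ is the greedy policy on the estimated reward, $\hat\pi_\infty(a)=\mathbb{1}(a=\arg\max_{a'}\hat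 r(a'))$ (the $\lambda\to\infty$ limit of the KL-regularized optimum $\pi_\lambda(a)\propto\pi_0(a)e^{\lambda\hat r(a)}$). For a policy $\pi\in\Delta([K])$, $\mathsf{SubOpt}(\pi)=\max_a r^\star(a)-\mathbb{E}_{a\sim\pi}[r^\star(a)]$. *)

(* Defs.v *)
From HB Require Import structures.
From mathcomp Require Import all_boot all_order all_algebra.
From mathcomp Require Import all_classical all_reals all_analysis.
Set Implicit Arguments. Unset Strict Implicit. Unset Printing Implicit Defensive.
Import Order.TTheory GRing.Theory Num.Theory.
Local Open Scope ring_scope.
Local Open Scope classical_set_scope.

(* Arms [K] = {1,2,3} are encoded as 'I_3 : arm k  <->  ordinal k-1.
   So arm 1 is ord0 and arm 3 is ord_max. *)
Definition sample := ('I_3 * 'I_3 * bool)%type.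

Definition sigma {R : realType} (x : R) : R := expR x / (1 + expR x).

Definition rstar {R : realType} (a : 'I_3) : R := (nat_of_ord a == 0)%N%:R.

Definition is_pair_dist {R : realType} (mu : 'I_3 -> 'I_3 -> R) : Prop :=
  (forall a b, 0 <= mu a b) /\ (forall a, mu a a = 0) /\
  \sum_(a : 'I_3) \sum_(b : 'I_3) mu a b = 1.

Definition psample {R : realType} (mu : 'I_3 -> 'I_3 -> R) (s : sample) : R :=
  let '(a, a', y) := s in
  mu a a' * (if y then sigma (rstar a - rstar a') else 1 - sigma (rstar a - rstar a')).

Definition pdata {R : realType} (n : nat) (mu : 'I_3 -> 'I_3 -> R)
  (D : {ffun 'I_n -> sample}) : R := \prod_(i < n) psample mu (D i).

Definition Prob {R : realType} (n : nat) (mu : 'I_3 -> 'I_3 -> R)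
  (E : {ffun 'I_n -> sample} -> Prop) : R :=
  \sum_(D : {ffun 'I_n -> sample} | `[< E D >]) pdata mu D.

Definition LCE {R : realType} (n : nat) (D : {ffun 'I_n -> sample}) (r : 'I_3 -> R) : R :=
  - (n%:R^-1) * \sum_(i < n)
      (let '(a, a', y) := D i in
       (y%:R * ln (sigma (r a - r a')) + (1 - y%:R) * ln (sigma (r a' - r a)))).

Definition is_maximizer {R : realType} (r : 'I_3 -> R) (a : 'I_3) : Prop :=
  forall b, r b <= r a.

Definition is_policy {R : realType} (pi : 'I_3 -> R) : Prop :=
  (forall a, 0 <= pi a) /\ \sum_(a : 'I_3) pi a = 1.

Definition SubOpt {R : realType} (pi : 'I_3 -> R) : R :=
  \big[Num.max/rstar ord0]_(a : 'I_3) rstar a - \sum_(a : 'I_3) pi a * rstar a.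

Definition bad_event {R : realType} (n : nat) (D : {ffun 'I_n -> sample}) : Prop :=
  forall r : nat -> 'I_3 -> R,
    (forall m, r m ord_max = 0) ->
    (LCE D (r m) @[m --> \oo] --> inf [set LCE D r' | r' in [set r' : 'I_3 -> R | r' ord_max = 0]]) ->
    exists m0 : nat, forall m : nat, (m0 <= m)%N ->
      ~ is_maximizer (r m) ord0 /\
      (forall pi : 'I_3 -> R, is_policy pi ->
         (forall a, 0 < pi a -> is_maximizer (r m) a) -> 1 <= SubOpt pi).

(* Main.v *)
Require Import Defs.
From HB Require Import structures.
From mathcomp Require Import all_boot all_order all_algebra.
From mathcomp Require Import all_classical all_reals all_analysis.
From mathcomp Require Import lra ring.
Import Order.TTheory GRing.Theory Num.Theory.
Local Open Scope ring_scope.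

Local Open Scope classical_set_scope.
Section S.
Variable R : realType.
Lemma sigma_gt0 (x : R) : 0 < sigma x.
Proof. rewrite /sigma divr_gt0 // ?expR_gt0 //; have := expR_gt0 x; lra. Qed.
Lemma sigma_le1 (x : R) : sigma x <= 1.
Proof. rewrite /sigma ler_pdivrMr; last by have := expR_gt0 x; lra. lra. Qed.
Lemma sigma_lt (x y : R) : x < y -> sigma x < sigma y.
Proof.
move=> xy; have ex := expR_gt0 x; have ey := expR_gt0 y.
have exy : expR x < expR y by rewrite ltr_expR.
rewrite /sigma ltr_pdivrMr; last lra.
rewrite mulrAC ltr_pdivlMr; last lra.
nra.
Qed.

Definition a1 : 'I_3 := @Ordinal 3 1 isT.
Definition s0 : sample := (ord0, a1, false).
Definition s1 (b : bool) : sample := (a1, ord_max, b).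
Definition Q {n : nat} (i : 'I_n) : 'I_n -> pred sample :=
  fun j x => if j == i then x == s0 else (x == s1 false) || (x == s1 true).

Lemma LCE_ge0 n (D : {ffun 'I_n -> sample}) (r : 'I_3 -> R) : 0 <= LCE D r.
Proof.
rewrite /LCE; apply: mulr_le0; first by rewrite oppr_le0 invr_ge0.
apply: sumr_le0 => j _; case: (D j) => [[a a'] y].
have h1 := ln_le0 (sigma_le1 (r a - r a')).
have h2 := ln_le0 (sigma_le1 (r a' - r a)).
case: y => /=; lra.
Qed.

Lemma LCE_diff n (i : 'I_n) (D : {ffun 'I_n -> sample}) (r rr : 'I_3 -> R) :
  D \in family (Q i) -> r a1 = rr a1 -> r ord_max = rr ord_max ->
  LCE D r - LCE D rr = - n%:R^-1 * (ln (sigma (r a1 - r ord0)) - ln (sigma (rr a1 - rr ord0))).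
Proof.
move=> /familyP HD e1 e2.
rewrite /LCE -mulrBr -sumrB (bigD1 i) //= big1 ?addr0.
  have := HD i; rewrite /Q /= eqxx => /eqP ->.
  rewrite /=; ring.
move=> j ji; have := HD j; rewrite /Q /= (negbTE ji) => /orP [] /eqP ->;
  rewrite /= e1 e2 subrr //.
Qed.

Lemma bad n (i : 'I_n) (D : {ffun 'I_n -> sample}) :
  D \in family (Q i) -> @bad_event R n D.
Proof.
move=> HD r r2 cv.
set S := [set LCE D r' | r' in [set r' : 'I_3 -> R | r' ord_max = 0]].
have n0 : (0 < n)%N by case: n i {HD r2 cv S D} => [[]|].
have np : (0:R) < n%:R^-1 by rewrite invr_gt0 ltr0n.
set g := n%:R^-1 * (ln (sigma (1:R)) - ln (sigma 0)).
have gp : 0 < g.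
  rewrite /g mulr_gt0 // subr_gt0 ltr_ln ?posrE ?sigma_gt0 //.
  exact: sigma_lt.
have key : forall m, r m a1 <= r m ord0 -> g <= LCE D (r m) - inf S.
  move=> m hm.
  set rr := fun a : 'I_3 => if a == ord0 then r m a1 - 1 else r m a.
  have Sr : S (LCE D rr) by exists rr => //; rewrite /rr /= r2.
  have lb : has_lbound S by exists 0 => y [r' _ <-]; exact: LCE_ge0.
  have Li := ge_inf lb Sr.
  have := @LCE_diff n i D (r m) rr HD erefl erefl.
  rewrite /rr /= (_ : r m a1 - (r m a1 - 1) = 1); last by ring.
  have : ln (sigma (r m a1 - r m ord0)) <= ln (sigma 0).
    rewrite ler_ln ?posrE ?sigma_gt0 //.
    have [->|lt] := eqVneq (r m a1 - r m ord0) 0; first by [].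
    apply/ltW/sigma_lt; rewrite lt_neqAle lt /=; lra.
  move=> h e.
  have : g <= LCE D (r m) - LCE D rr.
    rewrite e /g; rewrite mulNr -mulrN; apply: ler_wpM2l; first exact: ltW.
    lra.
  lra.
have := cvgr_dist_lt _ _ cv _ gp.
case=> m0 _ Hm0.
exists m0 => m hm.
have nm : ~ is_maximizer (r m) ord0.
  move=> mx; have := key m (mx a1).
  have := Hm0 m hm; rewrite /= => h.
  have : `|inf S - LCE D (r m)| >= LCE D (r m) - inf S.
    by rewrite distrC ler_norm.
  lra.
split => // pi [pi0 pi1] supp.
have p0 : pi ord0 = 0.
  apply/eqP; rewrite eq_le pi0 andbT leNgt; apply/negP => /supp; exact: nm.
have hM : 1 <= \big[Num.max/rstar ord0]_(a < 3) rstar a :> R.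
  by rewrite big_ord_recl le_max /rstar /= lexx.
rewrite /SubOpt !big_ord_recr !big_ord0 /=.
have e0 : widen_ord (m:=3) (leqnSn 2) (widen_ord (m:=2) (leqnSn 1) ord_max) = ord0 by apply: val_inj.
rewrite e0 p0 /rstar /= !(mul0r, mulr0, add0r, addr0, subr0).
exact: hM.
Qed.

Definition muC (n : nat) (a b : 'I_3) : R :=
  if (a == ord0) && (b == a1) then n%:R^-1
  else if (a == a1) && (b == ord_max) then 1 - n%:R^-1 else 0.

Lemma muC_dist n : (0 < n)%N -> is_pair_dist (muC n).
Proof.
move=> n0.
have np : (0:R) < n%:R^-1 by rewrite invr_gt0 ltr0n.
have n1 : n%:R^-1 <= 1 :> R by rewrite invf_le1 ?ltr0n // ler1n.
split; [|split].
- move=> a b; rewrite /muC; case: ifP => _; first exact: ltW.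
  case: ifP => _ //; lra.
- by move=> a; rewrite /muC; case: (a =P ord0) => [->|] //= _; case: (a =P a1) => [->|].
- rewrite !big_ord_recr !big_ord0 /= /muC /=.
  lra.
Qed.

Lemma psample_ge0 n (x : sample) : (0 < n)%N -> 0 <= psample (muC n) x.
Proof.
move=> n0; case: (@muC_dist n n0) => h _.
case: x => [[a b] y] /=; apply: mulr_ge0 => //.
case: y; first exact: ltW (sigma_gt0 _).
by rewrite subr_ge0 sigma_le1.
Qed.

Lemma pdata_ge0 n (D : {ffun 'I_n -> sample}) : (0 < n)%N -> 0 <= pdata (muC n) D.
Proof. move=> n0; apply: prodr_ge0 => i _; exact: (@psample_ge0 n _ n0). Qed.

Lemma s1s0 b : (s1 b == s0) = false.
Proof. by []. Qed.

Lemma step1 n (n0 : (0 < n)%N) :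
  \sum_(D | [exists i, D \in family (@Q n i)]) pdata (muC n) D <= Prob (muC n) (@bad_event R n).
Proof.
rewrite /Prob [X in _ <= X]big_mkcond [X in X <= _]big_mkcond.
apply: ler_sum => D _.
have [/existsP [i Hi]|_] := boolP [exists i, D \in family (@Q n i)].
  by rewrite asboolT //; exact: (@bad n i D Hi).
by case: ifP => _ //; exact: (@pdata_ge0 n D n0).
Qed.

Lemma step2 n (f : {ffun 'I_n -> sample} -> R) :
  \sum_(D | [exists i, D \in family (@Q n i)]) f D =
  \sum_i \sum_(D in family (@Q n i)) f D.
Proof.
under [RHS]eq_bigr do rewrite big_mkcond.
rewrite exchange_big /= big_mkcond /=.
apply: eq_bigr => D _.
have [/existsP [i0 H0]|/existsPn H] := boolP [exists i, D \in family (@Q n i)].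
  rewrite (bigD1 i0) //= H0 big1 ?addr0 // => k ki; case: ifP => // Hk.
  move/familyP: H0 => /(_ k); move/familyP: Hk => /(_ k).
  rewrite /Q eqxx (negbTE ki) /= => /eqP ->.
  by rewrite /s0 /s1.
by rewrite big1 // => k _; rewrite (negbTE (H k)).
Qed.


Lemma step3 n (i : 'I_n) :
  \sum_(D in family (@Q n i)) pdata (muC n) D =
  psample (muC n) s0 * (psample (muC n) (s1 false) + psample (muC n) (s1 true)) ^+ n.-1.
Proof.
rewrite /pdata -(bigA_distr_big_dep _ (fun j x => psample (muC n) x)).
rewrite (bigD1 i) //=.
have -> : \sum_(x | Q i i x) psample (muC n) x = psample (muC n) s0.
  by rewrite /Q eqxx big_pred1_eq.
congr (_ * _).
rewrite (eq_bigr (fun _ => psample (muC n) (s1 false) + psample (muC n) (s1 true))).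
  have -> : forall d : R, \prod_(j | j != i) d = \prod_(j in predC1 i) d by [].
  by rewrite prodr_const cardC1 card_ord.
move=> j ji; rewrite /Q (negbTE ji) (bigD1 (s1 false)) //=; congr (_ + _).
rewrite (big_pred1 (s1 true)) // => x /=.
by case: (x =P s1 false) => [->|] //=; rewrite andbT.
Qed.

Lemma sigma1 : 1 - sigma (1 : R) = (1 + expR 1)^-1.
Proof.
rewrite /sigma; have := expR_gt0 (1:R) => h.
field; lra.
Qed.

Lemma e_le : expR (1 : R) <= 28/10.
Proof.
set y := expR (20^-1 : R).
have hy0 : 0 < y by exact: expR_gt0.
have h1 : 1 - 20^-1 <= expR (- 20^-1 : R) by have := expR_ge1Dx (- 20^-1 : R); lra.
have hy : y <= 20/19.
  move: h1; rewrite expRN -/y => h1.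
  have : 19/20 <= y^-1 by lra.
  rewrite -[X in X <= _]invf_div lef_pV2 ?posrE //; lra.
have -> : expR (1:R) = y ^+ 20.
  by rewrite /y -expRM_natl mulfV.
clearbody y.
have g : forall k, 0 <= y ^+ k by move=> k; rewrite exprn_ge0 // ltW.
have e2 : y ^+ 2 <= 11081/10000.
  rewrite expr2; apply: (le_trans (ler_pM _ _ hy hy)); [exact: ltW|exact: ltW|lra].
have e4 : y ^+ 4 <= 12279/10000.
  have -> : y ^+ 4 = y^+2 * y^+2 by rewrite -exprD.
  apply: (le_trans (ler_pM _ _ e2 e2)); [exact: g|exact: g|lra].
have e5 : y ^+ 5 <= 12926/10000.
  rewrite exprS mulrC. apply: (le_trans (ler_pM _ _ e4 hy)); [exact: g|exact: ltW|lra].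
have e10 : y ^+ 10 <= 16709/10000.
  have -> : y ^+ 10 = y^+5 * y^+5 by rewrite -exprD.
  apply: (le_trans (ler_pM _ _ e5 e5)); [exact: g|exact: g|lra].
have -> : y ^+ 20 = y^+10 * y^+10 by rewrite -exprD.
apply: (le_trans (ler_pM _ _ e10 e10)); [exact: g|exact: g|lra].
Qed.
Lemma pow_bound (k : nat) : (0 < k)%N ->
  (expR (1:R))^-1 <= (1 - (k.+1)%:R^-1) ^+ k.
Proof.
move=> k0.
have kp : (0:R) < k%:R by rewrite ltr0n.
have hq : (1 + k%:R^-1) ^+ k <= expR (1:R).
  rewrite -[X in expR X](@mulfV _ k%:R) ?gt_eqF // expRM_natl.
  have ki : 0 < k%:R^-1 :> R by rewrite invr_gt0.
  apply: lerXn2r; rewrite ?nnegrE ?expR_ge0 ?expR_ge1Dx //.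
have e0 := expR_gt0 (1:R).
have -> : 1 - (k.+1)%:R^-1 = (1 + k%:R^-1)^-1 :> R.
  rewrite -(addn1 k) natrD. field. by apply/andP; split; apply/negP => /eqP; lra.
rewrite exprVn lef_pV2 ?posrE ?exprn_gt0 //.
Qed.

End S.
Local Close Scope classical_set_scope.

Theorem corollary3 (R : realType) (n : nat) (hn : (500 < n)%N) :
  exists mu : 'I_3 -> 'I_3 -> R,
    is_pair_dist mu /\ 9 / 100 <= Prob mu (@bad_event R n).
Proof.
have n0 : (0 < n)%N by apply: leq_trans hn.
exists (muC R n); split; first exact: muC_dist.
apply: le_trans (@step1 R n n0).
rewrite step2.
under eq_bigr do rewrite step3.
rewrite sumr_const card_ord.
have c : psample (muC R n) s0 = n%:R^-1 * (1 - sigma 1).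
  by rewrite /= /muC /rstar /= subr0.
have d : psample (muC R n) (s1 false) + psample (muC R n) (s1 true) = 1 - n%:R^-1.
  rewrite /= /muC /=; ring.
rewrite c d.
clear c d; move: hn n0; case: n => [//|k] hn n0.
rewrite [k.+1.-1]/=.
have k0 : (0 < k)%N by move: hn; rewrite ltnS; apply: leq_trans.
have hP := @pow_bound R k k0.
have he := e_le R. have e0 := expR_gt0 (1:R). rewrite sigma1.
rewrite -[_ *+ k.+1]mulr_natr.
set P := (1 - k.+1%:R^-1)^+k.
move: hP he e0; set e := expR 1 => hP he e0.
have kp : (0:R) < k.+1%:R by rewrite ltr0n.
have -> : k.+1%:R^-1 * (1+e)^-1 * P * k.+1%:R = (1+e)^-1 * P.
  by field; apply/andP; split; apply/negP => /eqP; lra.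
have h1 : 9/100 <= (1+e)^-1 * e^-1.
  rewrite -invfM -[9/100 : R]invf_div lef_pV2 ?posrE; [rewrite mulrDl mul1r; have := ler_wpM2r (ltW e0) he; lra|lra|apply: mulr_gt0; lra].
have h2 : (1+e)^-1 * e^-1 <= (1+e)^-1 * P.
  by apply: ler_wpM2l => //; rewrite invr_ge0; lra.
lra.
Qed.
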